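(* For $n\ge2$, consider the IID instance in which each of the $n$ actions independently has a good type with (receiver, sender) values $(1,1)$ with probability $1/n$ and a bad type with values $(0,0)$ with probability $1-1/n$. Then for every $k\in\{2,\dots,n\}$, $\operatorname{OPT}_k\le\frac{e}{e-1}\cdot\frac kn\cdot\operatorname{OPT}_n$.
   Context: Bayesian persuasion: receiver chooses one of actions $[n]$; the sender observes the state (types of all actions) and sends one of $k$ signals according to a committed scheme; the receiver picks an action maximizing her conditional expected value given the signal, ties broken in favor of the sender. $\operatorname{OPT}_k$ denotes the maximal expected sender utility over all schemes with $k$ signals. *)

(* Defs.v *)
From HB Require Import structures.
From mathcomp Require Import all_boot all_order all_algebra.
From mathcomp Require Import all_classical all_reals all_analysis.
Set Implicit Arguments. Unset Strict Implicit. Unset Printing Implicit Defensive.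
Import Order.TTheory GRing.Theory Num.Theory.
Local Open Scope classical_set_scope.
Local Open Scope ring_scope.

Section Persuasion.
Variables (R : realType) (T A : finType).
(* T : finite state space (type profile), A : actions,
   p : prior over states, r / u : receiver / sender value of an action in a state *)
Variables (p : T -> R) (r u : T -> A -> R).

(* A signaling scheme with k signals: phi s j = Pr[signal j | state s]. *)
Definition is_scheme (k : nat) (phi : T -> 'I_k -> R) : Prop :=
  (forall s j, 0 <= phi s j) /\ (forall s, \sum_(j < k) phi s j = 1).

(* Joint (unnormalized) expected receiver / sender value of action i with signal j:
   Pr[signal j] * E[value of i | signal j]. *)
Definition rec_val k (phi : T -> 'I_k -> R) (j : 'I_k) (i : A) : R :=
  \sum_(s : T) p s * phi s j * r s i.
Definition snd_val k (phi : T -> 'I_k -> R) (j : 'I_k) (i : A) : R :=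
  \sum_(s : T) p s * phi s j * u s i.

(* Receiver-optimal actions under signal j (argmax of conditional expected
   receiver value; scaling by Pr[signal j] does not change the argmax, and
   signals of probability 0 contribute 0 anyway). *)
Definition rec_opt k (phi : T -> 'I_k -> R) (j : 'I_k) (i : A) : bool :=
  [forall i' : A, rec_val phi j i' <= rec_val phi j i].

(* Sender's (joint) utility from signal j, ties broken in favour of the sender. *)
Definition snd_util_sig k (phi : T -> 'I_k -> R) (j : 'I_k) : R :=
  fine (\big[Order.max/-oo%E]_(i : A | rec_opt phi j i) (snd_val phi j i)%:E).

Definition snd_util k (phi : T -> 'I_k -> R) : R :=
  \sum_(j < k) snd_util_sig phi j.

Definition OPT (k : nat) : R :=
  sup [set v | exists phi : T -> 'I_k -> R, is_scheme phi /\ v = snd_util phi].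
End Persuasion.

(* The IID instance: state = type of each action (true = good). *)
Definition iid_prior (R : realType) (n : nat) (s : {ffun 'I_n -> bool}) : R :=
  \prod_(i < n) (if s i then n%:R^-1 else 1 - n%:R^-1).
Definition iid_val (R : realType) (n : nat) (s : {ffun 'I_n -> bool}) (i : 'I_n) : R :=
  if s i then 1 else 0.

Definition OPT_iid (R : realType) (n k : nat) : R :=
  OPT (@iid_prior R n) (@iid_val R n) (@iid_val R n) k.

(* Main.v *)
Require Import Defs.
From HB Require Import structures.
From mathcomp Require Import all_boot all_order all_algebra.
From mathcomp Require Import all_classical all_reals all_analysis.
From mathcomp Require Import ring lra.
Import Order.TTheory GRing.Theory Num.Theory.
Local Open Scope ring_scope.

Section Gen.
Variables (R : realType) (T A : finType) (p : T -> R) (r : T -> A -> R).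

Lemma sig_ub k (phi : T -> 'I_k -> R) j M :
  (forall i, rec_val p r phi j i <= M) -> 0 <= M -> snd_util_sig p r r phi j <= M.
Proof.
move=> H M0; rewrite /snd_util_sig.
have : (\big[Order.max/-oo%E]_(i : A | rec_opt p r phi j i) (snd_val p r phi j i)%:E <= M%:E)%E.
  apply: (big_ind (fun x => x <= M%:E)%E) => //; first exact: leNye.
  - by move=> x y hx hy; rewrite ge_max hx hy.
  - by move=> i _; rewrite lee_fin; apply: H.
by case: (\big[_/_]_(_ | _) _) => //= x; rewrite lee_fin.
Qed.

Lemma sig_lb k (phi : T -> 'I_k -> R) j i0 :
  rec_val p r phi j i0 <= snd_util_sig p r r phi j.
Proof.
have [im Him] : exists im, forall i, rec_val p r phi j i <= rec_val p r phi j im.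
  case: (@arg_maxP _ _ _ i0 predT (rec_val p r phi j) isT) => im _ H.
  by exists im => i; apply: H.
have opt : rec_opt p r phi j im by apply/forallP.
rewrite /snd_util_sig.
have nf : (\big[Order.max/-oo%E]_(i : A | rec_opt p r phi j i) (snd_val p r phi j i)%:E != +oo)%E.
  apply: (big_ind (fun x => x != +oo)%E) => //.
  by move=> x y hx hy; case: (leP x y).
have lb : ((snd_val p r phi j im)%:E <= \big[Order.max/-oo%E]_(i : A | rec_opt p r phi j i) (snd_val p r phi j i)%:E)%E.
  by rewrite (bigD1 im) //= le_max lexx.
move: nf lb; case: (\big[_/_]_(_ | _) _) => //= x _; rewrite lee_fin => h.
exact: le_trans (Him i0) h.
Qed.
End Gen.

Section IID.
Variables (R : realType) (n : nat).
Hypothesis n1 : (1 <= n)%N.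
Local Notation p := (@iid_prior R n).
Local Notation v := (@iid_val R n).
Let N : R := n%:R^-1.

Lemma N01 : 0 <= N <= 1.
Proof.
rewrite /N invr_ge0 ler0n /= invf_le1 ?ler1n // ltr0n //.
Qed.

Lemma p_ge0 s : 0 <= p s.
Proof.
apply: prodr_ge0 => i _; case: (s i); have /andP[a b] := N01; rewrite /N in a b *.
  by []. by rewrite subr_ge0.
Qed.

Lemma v_ge0 s i : 0 <= v s i.
Proof. by rewrite /iid_val; case: (s i). Qed.

Lemma p_total : \sum_s p s = 1.
Proof.
have := @bigA_distr_bigA _ _ _ _ _ 'I_n bool
  (fun l (b : bool) => if b then N else 1 - N).
rewrite /iid_prior => <-.
by rewrite big1 // => i _; rewrite big_bool /= /N addrC subrK.
Qed.

Lemma p_marg i : \sum_s p s * v s i = N.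
Proof.
transitivity (\prod_(l < n) \sum_(b : bool)
   ((if b then N else 1 - N) * (if l == i then (if b then 1 else 0) else 1))).
  rewrite bigA_distr_bigA; apply: eq_bigr => s _; rewrite big_split /=; congr (_ * _).
  rewrite (bigD1 i) //= eqxx big1 ?mulr1 // => l /negbTE ->; by [].
rewrite (bigD1 i) //= [X in _ * X]big1.
  by rewrite big_bool /= eqxx mulr1 mulr0 addr0 mulr1.
by move=> l /negbTE hl; rewrite big_bool /= hl !mulr1 /N addrC subrK.
Qed.

Lemma rec_ub k (phi : {ffun 'I_n -> bool} -> 'I_k -> R) j i :
  is_scheme phi -> rec_val p v phi j i <= N.
Proof.
move=> [h0 h1]; rewrite /rec_val -(p_marg i); apply: ler_sum => s _.
rewrite mulrAC -[leRHS]mulr1; apply: ler_wpM2l.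
  by rewrite mulr_ge0 ?p_ge0 ?v_ge0.
rewrite -(h1 s) (bigD1 j) //= lerDl; exact: sumr_ge0.
Qed.

Lemma util_ub k (phi : {ffun 'I_n -> bool} -> 'I_k -> R) :
  is_scheme phi -> snd_util p v v phi <= k%:R * N.
Proof.
move=> hs; rewrite /snd_util.
apply: le_trans (_ : \sum_(j < k) N <= _).
  apply: ler_sum => j _; apply: sig_ub => [i|]; first exact: rec_ub.
  by case/andP: N01.
by rewrite sumr_const card_ord mulr_natl.
Qed.

Lemma OPT_ub k (j0 : 'I_k) : OPT_iid R n k <= k%:R * N.
Proof.
apply: ge_sup.
  exists (snd_util p v v (fun (s : {ffun 'I_n -> bool}) (j : 'I_k) => (j == j0)%:R)).
  exists (fun (s : {ffun 'I_n -> bool}) (j : 'I_k) => (j == j0)%:R); split => //.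
  split=> [s j|s]; first by rewrite ler0n.
  rewrite (bigD1 j0) //= eqxx big1 ?addr0 // => j /negbTE -> //.
by move=> x [phi [hs ->]]; apply: util_ub.
Qed.

Definition phiL (j0 : 'I_n) (s : {ffun 'I_n -> bool}) (j : 'I_n) : R :=
  if [pick i | s i] is Some i0 then (j == i0)%:R else (j == j0)%:R.

Lemma phiL_scheme j0 : is_scheme (phiL j0).
Proof.
split=> [s j|s]; rewrite /phiL.
  by case: pickP => [i0 _|_]; rewrite ler0n.
case: pickP => [i0 _|_]; [set c := i0 | set c := j0];
  rewrite (bigD1 c) //= eqxx big1 ?addr0 // => j /negbTE -> //.
Qed.

Lemma phiL_s j0 s :
  \sum_j phiL j0 s j * v s j = 1 - (s == [ffun => false])%:R.
Proof.
rewrite /phiL; case: pickP => [i0 hi0|hn].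
  rewrite (bigD1 i0) //= eqxx big1 ?addr0.
    have -> : (s == [ffun => false]) = false.
      by apply/negbTE/eqP => e; move: hi0; rewrite e ffunE.
    by rewrite /iid_val hi0 mul1r subr0.
  by move=> j /negbTE ->; rewrite mul0r.
have -> : s = [ffun => false] by apply/ffunP => i; rewrite ffunE; exact: hn.
rewrite eqxx subrr big1 // => j _; by rewrite /iid_val ffunE mulr0.
Qed.

Lemma OPT_lb (j0 : 'I_n) : 1 - (1 - N) ^+ n <= OPT_iid R n n.
Proof.
have hs : has_sup [set x | exists phi : {ffun 'I_n -> bool} -> 'I_n -> R,
   is_scheme phi /\ x = snd_util p v v phi].
  split; first by exists (snd_util p v v (phiL j0)); exists (phiL j0); split => //; exact: phiL_scheme.
  by exists (n%:R * N) => x [phi [h ->]]; apply: util_ub.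
apply: le_trans (_ : snd_util p v v (phiL j0) <= _); last first.
  apply: sup_upper_bound => //; exists (phiL j0); split => //; exact: phiL_scheme.
apply: le_trans (_ : \sum_j rec_val p v (phiL j0) j j <= _); last first.
  by apply: ler_sum => j _; apply: sig_lb.
rewrite /rec_val exchange_big /=.
have E : forall s, \sum_j p s * phiL j0 s j * v s j
    = p s * (1 - (s == [ffun => false])%:R).
  by move=> s; rewrite -(phiL_s j0) mulr_sumr; apply: eq_bigr => j _; rewrite mulrA.
rewrite (eq_bigr _ (fun s _ => E s)).
rewrite le_eqVlt; apply/orP; left; apply/eqP.
under eq_bigr => s _ do rewrite mulrBr mulr1.
rewrite sumrB p_total (bigD1 [ffun => false]) //= eqxx mulr1 big1 ?addr0.
  by congr (_ - _); rewrite /iid_prior (eq_bigr (fun _ => 1 - N)) ?prodr_const ?card_ord // => i _; rewrite ffunE.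
by move=> s /negbTE ->; rewrite mulr0.
Qed.

End IID.

Theorem lemma5p2 (R : realType) (n k : nat) :
  (2 <= n)%N -> (2 <= k <= n)%N ->
  OPT_iid R n k <=
    expR 1 / (expR 1 - 1) * (k%:R / n%:R) * OPT_iid R n n.
Proof.
move=> n2 /andP[k2 kn].
have n1 : (0 < n)%N by apply: leq_trans n2.
have k0 : (0 < k)%N by apply: leq_trans k2.
have hub := @OPT_ub R n n1 k (Ordinal k0).
have hlb := @OPT_lb R n n1 (Ordinal n1).
set N : R := n%:R^-1 in hlb.
have nN : n%:R * N = 1 by rewrite /N mulfV // pnatr_eq0 -lt0n.
have N0 : 0 <= N by rewrite /N invr_ge0 ler0n.
have N1 : N <= 1 by rewrite /N invf_le1 ?ler1n // ltr0n.
have hexp : (1 - N) ^+ n <= expR (-1).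
  apply: le_trans (_ : expR (- N) ^+ n <= _).
    apply: lerXn2r; rewrite ?nnegrE ?subr_ge0 ?expR_ge0 //.
    by have := expR_ge1Dx (- N).
  by rewrite -expRM_natl mulrN nN.
have e1 : 1 < expR (1 : R) by rewrite expR_gt1.
have eN : expR (-1 : R) = (expR 1)^-1 by rewrite expRN.
set e := expR (1 : R) in e1 eN *.
set O := OPT_iid R n n in hlb *.
have hO : 1 <= e / (e - 1) * O.
  have e0 : 0 < e by apply: lt_trans e1.
  have em0 : 0 < e - 1 by rewrite subr_gt0.
  apply: le_trans (_ : e / (e - 1) * (1 - e^-1) <= _).
    rewrite le_eqVlt; apply/orP; left; apply/eqP.
    by field; rewrite ?gt_eqF.
  apply: ler_wpM2l; first by rewrite divr_ge0 // ltW.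
  by apply: le_trans hlb; rewrite lerD2l lerN2 -eN.
apply: le_trans hub _.
have a0 : 0 <= k%:R / n%:R :> R by rewrite divr_ge0 ?ler0n.
rewrite (mulrC (e / (e - 1))) -mulrA -[leLHS]mulr1. by apply: ler_wpM2l.
Qed.
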